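(* Let $r>0$ and let $Z$ be a set of homeomorphisms $[0,r)\to[0,r)$ such that (i) $(\alpha)z\ge\alpha$ for all $z\in Z$ and all $\alpha\in[0,r)$; (ii) $\mathrm{supp}(z)$ is an interval for every $z\in Z$; (iii) $\bigcup_{z\in Z}\mathrm{supp}(z)$ is dense in $(0,r)$. Let $f$ be a permutation of $[0,r)$ such that $f$ commutes with every $z\in Z$, $f$ is right-continuous at every point of $[0,r)$, and $f$ has only finitely many points of discontinuity. Then $f$ is continuous.
   Context: Maps act on the right. For a permutation $g$ of a set $S$, $\mathrm{fix}(g)$ is its set of fixed points and $\mathrm{supp}(g)=S\setminus\mathrm{fix}(g)$. *)

(* Defs.v *)
From Stdlib Require Import Reals List.
Open Scope R_scope.

Definition in_dom (r x : R) : Prop := 0 <= x < r.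

Definition maps_into (r : R) (f : R -> R) : Prop :=
  forall x, in_dom r x -> in_dom r (f x).

Definition perm_on (r : R) (f : R -> R) : Prop :=
  maps_into r f /\
  (forall x y, in_dom r x -> in_dom r y -> f x = f y -> x = y) /\
  (forall y, in_dom r y -> exists x, in_dom r x /\ f x = y).

Definition cont_at_on (r : R) (f : R -> R) (x : R) : Prop :=
  forall eps, 0 < eps -> exists delta, 0 < delta /\
    forall y, in_dom r y -> Rabs (y - x) < delta -> Rabs (f y - f x) < eps.

Definition right_cont_at_on (r : R) (f : R -> R) (x : R) : Prop :=
  forall eps, 0 < eps -> exists delta, 0 < delta /\
    forall y, in_dom r y -> x <= y -> y - x < delta -> Rabs (f y - f x) < eps.

Definition homeo_on (r : R) (z : R -> R) : Prop :=
  perm_on r z /\ (forall x, in_dom r x -> cont_at_on r z x) /\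
  exists g : R -> R, maps_into r g /\
    (forall x, in_dom r x -> g (z x) = x /\ z (g x) = x) /\
    (forall x, in_dom r x -> cont_at_on r g x).

(* supp(z) = [0,r) \ fix(z); maps act on the right, (a)z is written z a. *)
Definition supp (r : R) (z : R -> R) (a : R) : Prop := in_dom r a /\ z a <> a.

Definition is_interval (S : R -> Prop) : Prop :=
  forall a b c, S a -> S b -> a <= c <= b -> S c.

(* Main.v *)
Require Import Defs.
From Stdlib Require Import Reals List Lra Classical Lia.
Open Scope R_scope.

Lemma abs_lt_iff x a : Rabs x < a <-> (x < a /\ - a < x).
Proof. split; [apply Rabs_def2| intros [? ?]; apply Rabs_def1; auto]. Qed.

Lemma eq_of_close a b : (forall e, 0 < e -> Rabs (a - b) < 2 * e) -> a = b.
Proof.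
  intros H. destruct (Req_dec a b) as [|Hn]; auto. exfalso.
  assert (Hp : 0 < Rabs (a - b)) by (apply Rabs_pos_lt; lra).
  specialize (H (Rabs (a - b) / 4) ltac:(lra)). lra.
Qed.

Definition clamp a b t := Rmax a (Rmin b t).

Lemma clamp_in a b t : a <= b -> a <= clamp a b t <= b.
Proof. intros; unfold clamp, Rmax, Rmin; repeat destruct Rle_dec; lra. Qed.

Lemma clamp_id a b t : a <= t <= b -> clamp a b t = t.
Proof. intros; unfold clamp, Rmax, Rmin; repeat destruct Rle_dec; lra. Qed.

Lemma clamp_lip a b y t : a <= b -> Rabs (clamp a b y - clamp a b t) <= Rabs (y - t).
Proof.
  intros; unfold clamp, Rmax, Rmin; repeat destruct Rle_dec;
  unfold Rabs; repeat destruct Rcase_abs; lra.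
Qed.

Lemma ivt_on r (F : R -> R) a b c : a <= b ->
  (forall t, a <= t <= b -> in_dom r t /\ cont_at_on r F t) ->
  (F a - c) * (F b - c) <= 0 -> exists t, a <= t <= b /\ F t = c.
Proof.
  intros Hab Hc Hs.
  set (G := fun t => F (clamp a b t) - c).
  assert (HG : continuity G).
  { intro t. unfold continuity_pt, continue_in, limit1_in, limit_in. simpl.
    unfold R_dist. intros eps Heps.
    destruct (Hc (clamp a b t) (clamp_in a b t Hab)) as [_ Hct].
    destruct (Hct eps Heps) as [del [Hdel Hd]].
    exists del; split; auto. intros y [_ Hy].
    unfold G. replace (F (clamp a b y) - c - (F (clamp a b t) - c))
      with (F (clamp a b y) - F (clamp a b t)) by ring.
    apply Hd. apply (Hc _ (clamp_in a b y Hab)).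
    eapply Rle_lt_trans; [apply clamp_lip; auto| auto]. }
  assert (Ga : G a = F a - c) by (unfold G; rewrite clamp_id; lra).
  assert (Gb : G b = F b - c) by (unfold G; rewrite clamp_id; lra).
  destruct (IVT_cor G a b HG Hab) as [t [Ht Gt]]; [rewrite Ga, Gb; auto|].
  exists t; split; auto. unfold G in Gt. rewrite clamp_id in Gt; lra.
Qed.

Lemma between r f a b x :
  (forall t, a <= t <= b -> in_dom r t /\ cont_at_on r f t) ->
  (forall u v, in_dom r u -> in_dom r v -> f u = f v -> u = v) ->
  a < x < b -> (f a <= f x <= f b) \/ (f b <= f x <= f a).
Proof.
  intros Hc Hinj Hx.
  assert (Da : in_dom r a) by (apply Hc; lra).
  assert (Db : in_dom r b) by (apply Hc; lra).
  assert (Dx : in_dom r x) by (apply Hc; lra).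
  assert (Hab : f a <> f b) by (intro E; apply Hinj in E; auto; lra).
  assert (Hax : f a <> f x) by (intro E; apply Hinj in E; auto; lra).
  assert (Hbx : f b <> f x) by (intro E; apply Hinj in E; auto; lra).
  assert (Cl : forall u v, a <= u -> v <= b -> forall t, u <= t <= v -> in_dom r t /\ cont_at_on r f t)
    by (intros; apply Hc; lra).
  destruct (Rlt_or_le (f a) (f x)); destruct (Rlt_or_le (f b) (f x));
    destruct (Rlt_or_le (f a) (f b)).
  all: try (left; lra); try (right; lra); exfalso.
  -
    destruct (ivt_on r f a x (f b) ltac:(lra) (Cl a x ltac:(lra) ltac:(lra))) as [t [Ht Ft]].
    { assert (0 <= (f x - f b)) by lra. assert (f a - f b <= 0) by lra. nra. }
    apply Hinj in Ft; [lra| apply Hc; lra| auto].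
  - destruct (ivt_on r f x b (f a) ltac:(lra) (Cl x b ltac:(lra) ltac:(lra))) as [t [Ht Ft]].
    { assert (0 <= (f x - f a)) by lra. assert (f b - f a <= 0) by lra. nra. }
    apply Hinj in Ft; [lra| apply Hc; lra| auto].
  - destruct (ivt_on r f x b (f a) ltac:(lra) (Cl x b ltac:(lra) ltac:(lra))) as [t [Ht Ft]].
    { assert ((f x - f a) <= 0) by lra. assert (0 <= f b - f a) by lra. nra. }
    apply Hinj in Ft; [lra| apply Hc; lra| auto].
  - destruct (ivt_on r f a x (f b) ltac:(lra) (Cl a x ltac:(lra) ltac:(lra))) as [t [Ht Ft]].
    { assert ((f x - f b) <= 0) by lra. assert (0 <= f a - f b) by lra. nra. }
    apply Hinj in Ft; [lra| apply Hc; lra| auto].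
Qed.

Fixpoint itr (h : R -> R) (n : nat) (x : R) : R :=
  match n with O => x | S k => h (itr h k x) end.

Section Orbit.
Variables (Sd : R -> Prop) (h f : R -> R) (B : R).
Hypothesis hS : forall a, Sd a -> Sd (h a).
Hypothesis fS : forall a, Sd a -> Sd (f a).
Hypothesis hge : forall a, Sd a -> a <= h a.
Hypothesis hinj : forall a b, Sd a -> Sd b -> h a = h b -> a = b.
Hypothesis finj : forall a b, Sd a -> Sd b -> f a = f b -> a = b.
Hypothesis comm : forall a, Sd a -> f (h a) = h (f a).
Let J a := Sd a /\ h a <> a.
Hypothesis Jint : forall a b c, J a -> J b -> a <= c <= b -> J c.
Hypothesis hcont : forall p, Sd p -> forall eps, 0 < eps -> exists del, 0 < del /\
   forall a, Sd a -> Rabs (a - p) < del -> Rabs (h a - h p) < eps.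
Hypothesis Jbd : forall a, J a -> a <= B.
Hypothesis Sconv : forall a p, Sd a -> a <= p <= B -> Sd p.

Lemma J_h a : J a -> J (h a).
Proof. intros [Sa Ha]; split; [auto|]. intro E. apply hinj in E; auto. Qed.
Lemma J_f a : J a -> J (f a).
Proof. intros [Sa Ha]; split; [auto|]. rewrite <- comm by auto. intro E. apply finj in E; auto. Qed.
Lemma itr_J x n : J x -> J (itr h n x).
Proof. intros; induction n; simpl; auto using J_h. Qed.
Lemma itr_step x n : J x -> itr h n x <= itr h (Datatypes.S n) x.
Proof. intros Hx; simpl. apply hge. apply (itr_J x n Hx). Qed.
Lemma itr_mono x n m : J x -> (n <= m)%nat -> itr h n x <= itr h m x.
Proof.
  intros Hx Hnm. induction Hnm; [lra|]. eapply Rle_trans; [apply IHHnm| apply itr_step; auto].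
Qed.
Lemma itr_comm x n : Sd x -> f (itr h n x) = itr h n (f x).
Proof.
  intros Sx. induction n; simpl; auto.
  assert (Sd (itr h n x)) by (clear IHn; induction n; simpl; auto).
  rewrite comm by auto. congruence.
Qed.

Definition orb x := fun v => exists n, v = itr h n x.

Lemma orb_lub x : J x -> { p | is_lub (orb x) p }.
Proof.
  intros Hx. apply completeness.
  - exists B. intros v [n ->]. apply Jbd, itr_J; auto.
  - exists x. exists O. reflexivity.
Qed.

Lemma lub_approx x p : is_lub (orb x) p -> forall eps, 0 < eps -> exists n, p - eps < itr h n x.
Proof.
  intros [Hu Hl] eps He. apply NNPP; intro N.
  assert (is_upper_bound (orb x) (p - eps)).
  { intros v [n ->]. apply Rnot_lt_le. intro L. apply N. exists n; auto. }
  apply Hl in H. lra.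
Qed.

Lemma lub_fixed x p : J x -> is_lub (orb x) p ->
  Sd p /\ h p = p /\ x <= p <= B /\ (forall a, J a -> a < p).
Proof.
  intros Hx Hp.
  assert (xp : x <= p) by (apply (proj1 Hp); exists O; auto).
  assert (pB : p <= B) by (apply (proj2 Hp); intros v [n ->]; apply Jbd, itr_J; auto).
  assert (Sp : Sd p) by (apply (Sconv x); [apply Hx| lra]).
  assert (hp : h p = p).
  { assert (h p >= p) by (apply Rle_ge, hge; auto).
    destruct (Rle_lt_or_eq_dec p (h p) (Rge_le _ _ H)) as [L|E]; [|auto].
    exfalso. destruct (hcont p Sp (h p - p) ltac:(lra)) as [del [Hd Hc]].
    destruct (lub_approx x p Hp del Hd) as [n Hn].
    assert (u1 : itr h n x <= p) by (apply (proj1 Hp); exists n; auto).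
    assert (u2 : itr h (Datatypes.S n) x <= p) by (apply (proj1 Hp); exists (Datatypes.S n); auto).
    assert (Rabs (itr h n x - p) < del) by (apply Rabs_def1; lra).
    specialize (Hc _ (proj1 (itr_J x n Hx)) H0). apply Rabs_def2 in Hc.
    simpl in u2. lra. }
  repeat split; auto.
  intros a Ja. apply Rnot_le_lt. intro L.
  assert (Jp : J p) by (apply (Jint x a p); auto).
  apply (proj2 Jp); auto.
Qed.

Lemma orbit_main y : J y ->
  exists p, Sd p /\ h p = p /\ y < p <= B /\
   (forall eps, 0 < eps -> exists w, Sd w /\ p - eps < w < p /\ p - eps < f w < p) /\
   ((forall eps, 0 < eps -> exists del, 0 < del /\ forall a, Sd a -> Rabs (a - p) < del -> Rabs (f a - f p) < eps) -> f p = p).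
Proof.
  intros Jy.
  destruct (orb_lub y Jy) as [p Hp].
  destruct (orb_lub (f y) (J_f y Jy)) as [q Hq].
  destruct (lub_fixed y p Jy Hp) as (Sp & hp & [yp pB] & Jp).
  destruct (lub_fixed (f y) q (J_f y Jy) Hq) as (Sq & hq & [yq qB] & Jq).
  assert (pq : p <= q).
  { apply (proj2 Hp). intros v [n ->]. left. apply Jq, itr_J; auto. }
  assert (qp : q <= p).
  { apply (proj2 Hq). intros v [n ->]. left. apply Jp, itr_J, J_f; auto. }
  assert (q = p) by lra. subst q.
  assert (approx : forall eps, 0 < eps -> exists w, Sd w /\ p - eps < w < p /\ p - eps < f w < p).
  { intros eps He.
    destruct (lub_approx y p Hp eps He) as [n1 H1].
    destruct (lub_approx (f y) p Hq eps He) as [n2 H2].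
    exists (itr h (max n1 n2) y).
    assert (Jw := itr_J y (max n1 n2) Jy).
    refine (conj (proj1 Jw) (conj (conj _ _) (conj _ _))).
    + eapply Rlt_le_trans; [apply H1| apply (itr_mono y); [exact Jy| lia]].
    + apply Jp; exact Jw.
    + rewrite itr_comm by apply Jy.
      eapply Rlt_le_trans; [apply H2| apply (itr_mono (f y)); [apply J_f; exact Jy| lia]].
    + rewrite itr_comm by apply Jy. apply Jp, itr_J, J_f; exact Jy. }
  exists p; refine (conj Sp (conj hp (conj (conj _ pB) (conj approx _)))).
  - apply Jp; exact Jy.
  - intros Hfc. apply eq_of_close. intros e He.
    destruct (Hfc e He) as [del [Hd Hc]].
    destruct (approx (Rmin del e) ltac:(apply Rmin_pos; auto)) as [w (Sw & Hw1 & Hw2)].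
    assert (Rmin del e <= del) by apply Rmin_l. assert (Rmin del e <= e) by apply Rmin_r.
    assert (Rabs (w - p) < del) by (apply Rabs_def1; lra).
    specialize (Hc w Sw H1). apply Rabs_def2 in Hc. apply Rabs_def1; lra.
Qed.
End Orbit.

Lemma rlist_max (P : R -> Prop) (l : list R) :
  (exists x, P x /\ In x l) -> exists m, P m /\ forall y, P y -> In y l -> y <= m.
Proof.
  induction l as [|a l IH]; intros [x [Px Hx]]; [destruct Hx|].
  destruct (classic (exists x, P x /\ In x l)) as [E|NE].
  - destruct (IH E) as [m [Pm Hm]].
    destruct (classic (P a)) as [Pa|NPa].
    + destruct (Rle_lt_dec a m).
      * exists m; split; auto. intros y Py [<-|Hy]; auto.
      * exists a; split; auto. intros y Py [<-|Hy]; [lra|]. apply Hm in Hy; auto; lra.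
    + exists m; split; auto. intros y Py [<-|Hy]; [contradiction| auto].
  - destruct Hx as [<-|Hx]; [|exfalso; apply NE; eauto].
    exists a; split; auto. intros y Py [<-|Hy]; [lra| exfalso; apply NE; eauto].
Qed.

Lemma list_gap (l : list R) d : exists del, 0 < del /\ forall y, In y l -> y < d -> y <= d - del.
Proof.
  induction l as [|a l [del [Hd H]]].
  - exists 1; split; [lra| intros y []].
  - destruct (Rlt_le_dec a d).
    + exists (Rmin del (d - a)); split; [apply Rmin_pos; lra|].
      assert (Rmin del (d - a) <= del) by apply Rmin_l.
      assert (Rmin del (d - a) <= d - a) by apply Rmin_r.
      intros y [<-|Hy] Hyd; [lra|]. apply H in Hy; auto; lra.
    + exists del; split; auto. intros y [<-|Hy] Hyd; [lra| auto].
Qed.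

Lemma propagate r (z f : R -> R) d :
  homeo_on r z -> maps_into r f ->
  (forall a, in_dom r a -> f (z a) = z (f a)) ->
  in_dom r d -> cont_at_on r f (z d) -> cont_at_on r f d.
Proof.
  intros [[zm [zi zs]] [zc [g [gm [gzg gc]]]]] fm Hc Hd Hcz eps He.
  assert (key : forall a, in_dom r a -> f a = g (f (z a))).
  { intros a Ha. rewrite Hc by auto. symmetry. apply gzg. auto. }
  assert (Dzd : in_dom r (z d)) by auto.
  destruct (gc (f (z d)) (fm _ Dzd) eps He) as [d1 [Hd1 H1]].
  destruct (Hcz d1 Hd1) as [d2 [Hd2 H2]].
  destruct (zc d Hd d2 Hd2) as [d3 [Hd3 H3]].
  exists d3; split; auto. intros y Hy Hyd.
  rewrite (key y Hy), (key d Hd). apply H1; auto.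
Qed.

Theorem lemma3p2 (r : R) (Z : (R -> R) -> Prop) (f : R -> R) :
  0 < r ->
  (forall z, Z z -> homeo_on r z) ->
  (forall z, Z z -> forall a, in_dom r a -> z a >= a) ->
  (forall z, Z z -> is_interval (supp r z)) ->
  (forall x eps, 0 < x < r -> 0 < eps ->
     exists z y, Z z /\ supp r z y /\ Rabs (y - x) < eps) ->
  perm_on r f ->
  (forall z, Z z -> forall a, in_dom r a -> f (z a) = z (f a)) ->
  (forall x, in_dom r x -> right_cont_at_on r f x) ->
  (exists l : list R, forall x, in_dom r x -> ~ cont_at_on r f x -> In x l) ->
  forall x, in_dom r x -> cont_at_on r f x.
Proof.
  intros Hr Hhom Hi Hii Hiii Hf Hcomm Hrc [l Hl] x0 Hx0.
  destruct Hf as [fm [finj fsurj]].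
  apply NNPP; intro Hnc.
  destruct (rlist_max (fun x => in_dom r x /\ ~ cont_at_on r f x) l) as [d [[Dd Nd] Hmax]].
  { exists x0; split; [split; auto| apply Hl; auto]. }
  assert (Hmax' : forall y, in_dom r y -> d < y -> cont_at_on r f y).
  { intros y Hy Hdy. apply NNPP; intro N.
    assert (y <= d) by (apply Hmax; [split; auto| apply Hl; auto]). lra. }
  assert (zfix : forall z, Z z -> z d = d).
  { intros z Zz. destruct (Hhom z Zz) as [[zm _] _].
    assert (z d <= d).
    { apply Rnot_lt_le; intro L. apply Nd. apply (propagate r z f d); auto. }
    specialize (Hi z Zz d Dd). lra. }
  assert (dpos : 0 < d).
  { destruct Dd as [D0 Dr]. destruct (Rle_lt_or_eq_dec 0 d D0) as [|E]; auto. exfalso.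
    apply Nd. intros eps He. destruct (Hrc d (conj D0 Dr) eps He) as [del [Hdel H]].
    exists del; split; auto. intros y Hy Hyd. apply Rabs_def2 in Hyd. apply H; auto.
    - destruct Hy; lra.
    - lra. }
  destruct (list_gap l d) as [del0 [Hdel0 Hgap]].
  set (dl := Rmin del0 d).
  assert (dl1 : dl <= del0) by apply Rmin_l.
  assert (dl2 : dl <= d) by apply Rmin_r.
  assert (dl3 : 0 < dl) by (apply Rmin_pos; lra).
  assert (leftcont : forall t, d - dl < t < d -> in_dom r t /\ cont_at_on r f t).
  { intros t Ht. assert (Dt : in_dom r t) by (destruct Dd; split; lra).
    split; auto. apply NNPP; intro N. apply Hl in N; auto. apply Hgap in N; lra. }
  assert (ClaimL : forall eps, 0 < eps -> exists w, d - eps < w < d /\ Rabs (f w - d) < eps).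
  { intros eps He. set (e := Rmin eps dl).
    assert (e1 : e <= eps) by apply Rmin_l. assert (e2 : e <= dl) by apply Rmin_r.
    assert (e3 : 0 < e) by (apply Rmin_pos; lra).
    destruct (Hiii (d - e/2) (e/2)) as [z [y [Zz [[Dy zy] Hy]]]];
      [destruct Dd; split; lra| lra|].
    apply Rabs_def2 in Hy.
    destruct (Hhom z Zz) as [[zm [zinj _]] [zc _]].
    destruct (orbit_main (in_dom r) z f d zm fm
      (fun a Ha => Rge_le _ _ (Hi z Zz a Ha)) zinj finj (Hcomm z Zz) (Hii z Zz) zc)
      with (y := y) as (p & Sp & zp & [yp pd] & approx & fixc).
    - intros a [Da za]. apply Rnot_lt_le; intro L.
      apply (proj2 (Hii z Zz y a d (conj Dy zy) (conj Da za) ltac:(lra))). apply zfix; auto.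
    - intros a p [Da1 Da2] Hp. destruct Dd. split; lra.
    - split; auto.
    - destruct (Rle_lt_or_eq_dec p d pd) as [pl|pe].
      + assert (fp : f p = p) by (apply fixc, (leftcont p); lra).
        exists p. split; [lra|]. rewrite fp. apply Rabs_def1; lra.
      + destruct (approx eps He) as [w [Sw [Hw1 Hw2]]]. rewrite pe in *.
        exists w; split; [lra|]. apply Rabs_def1; lra. }
  assert (ClaimR : forall eps, 0 < eps -> exists w, in_dom r w /\ d < w < d + eps /\ Rabs (f w - d) < eps).
  { intros eps He. set (e := Rmin eps (r - d)).
    assert (e1 : e <= eps) by apply Rmin_l. assert (e2 : e <= r - d) by apply Rmin_r.
    assert (e3 : 0 < e) by (apply Rmin_pos; destruct Dd; lra).
    destruct (Hiii (d + e/2) (e/2)) as [z [y [Zz [[Dy zy] Hy]]]];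
      [destruct Dd; split; lra| lra|].
    apply Rabs_def2 in Hy.
    destruct (Hhom z Zz) as [[zm [zinj _]] [zc [g [gm [gz gc]]]]].
    assert (gle : forall u, in_dom r u -> g u <= u).
    { intros u Hu. destruct (gz u Hu) as [_ E]. pose proof (Hi z Zz (g u) (gm u Hu)) as G.
      rewrite E in G. lra. }
    assert (gcomm : forall u, in_dom r u -> f (g u) = g (f u)).
    { intros u Hu. pose proof (Hcomm z Zz (g u) (gm u Hu)) as E.
      rewrite (proj2 (gz u Hu)) in E. rewrite E. symmetry.
      apply (proj1 (gz _ (fm _ (gm u Hu)))). }
    assert (gsupp : forall u, in_dom r u -> (g u <> u <-> z u <> u)).
    { intros u Hu; split; intros N E; apply N.
      - pose proof (proj1 (gz u Hu)) as G; rewrite E in G; exact G.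
      - pose proof (proj2 (gz u Hu)) as G; rewrite E in G; exact G. }
    set (Sd := fun x => in_dom r (-x)).
    set (h := fun x => - g (-x)).
    set (fT := fun x => - f (-x)).
    assert (hsupp : forall a, Sd a -> (h a <> a <-> supp r z (-a))).
    { intros a Ha. unfold h. split.
      - intro N. split; auto. apply (gsupp _ Ha). intro E. apply N. rewrite E; lra.
      - intros [_ N] E. apply (gsupp _ Ha) in N. apply N. lra. }
    assert (X1 : forall a, Sd a -> Sd (h a)).
    { intros a Ha. unfold Sd, h. rewrite Ropp_involutive. apply gm; auto. }
    assert (X2 : forall a, Sd a -> Sd (fT a)).
    { intros a Ha. unfold Sd, fT. rewrite Ropp_involutive. apply fm; auto. }
    assert (X3 : forall a, Sd a -> a <= h a).
    { intros a Ha. unfold h. specialize (gle (-a) Ha). lra. }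
    assert (X4 : forall a b, Sd a -> Sd b -> h a = h b -> a = b).
    { intros a b Ha Hb E. unfold h in E. assert (E' : g (-a) = g (-b)) by lra.
      assert (-a = -b).
      { rewrite <- (proj2 (gz _ Ha)), <- (proj2 (gz _ Hb)), E'. reflexivity. }
      lra. }
    assert (X5 : forall a b, Sd a -> Sd b -> fT a = fT b -> a = b).
    { intros a b Ha Hb E. unfold fT in E. assert (-a = -b) by (apply finj; auto; lra). lra. }
    assert (X6 : forall a, Sd a -> fT (h a) = h (fT a)).
    { intros a Ha. unfold fT, h. rewrite !Ropp_involutive. rewrite gcomm by auto. reflexivity. }
    assert (X7 : forall a b c, (fun a0 => Sd a0 /\ h a0 <> a0) a ->
              (fun a0 => Sd a0 /\ h a0 <> a0) b -> a <= c <= b ->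
              (fun a0 => Sd a0 /\ h a0 <> a0) c).
    { intros a b c [Ha ha] [Hb hb] Hc. simpl.
      apply (hsupp _ Ha) in ha. apply (hsupp _ Hb) in hb.
      pose proof (Hii z Zz (-b) (-a) (-c) hb ha ltac:(lra)) as Sc.
      assert (Sdc : Sd c) by apply Sc.
      split; auto. apply (hsupp _ Sdc); auto. }
    assert (X8 : forall p, Sd p -> forall eps, 0 < eps -> exists del, 0 < del /\
      forall a, Sd a -> Rabs (a - p) < del -> Rabs (h a - h p) < eps).
    { intros p Sp eps0 He0. destruct (gc (-p) Sp eps0 He0) as [del [Hd H]].
      exists del; split; auto. intros a Sa Ha. unfold h.
      replace (- g (-a) - - g (-p)) with (-(g (-a) - g (-p))) by ring. rewrite Rabs_Ropp.
      apply H; auto. replace (-a - -p) with (-(a-p)) by ring; rewrite Rabs_Ropp; auto. }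
    assert (X9 : forall a, (fun a0 => Sd a0 /\ h a0 <> a0) a -> a <= -d).
    { intros a [Sa ha]. apply (hsupp _ Sa) in ha. apply Rnot_lt_le; intro L.
      apply (proj2 (Hii z Zz (-a) y d ha (conj Dy zy) ltac:(lra))). apply zfix; auto. }
    assert (X10 : forall a p, Sd a -> a <= p <= -d -> Sd p).
    { intros a p Sa Hp. unfold Sd, in_dom in *. lra. }
    assert (Sy : Sd (-y)) by (unfold Sd; rewrite Ropp_involutive; auto).
    assert (Y : (fun a0 => Sd a0 /\ h a0 <> a0) (-y)).
    { split; auto. apply (hsupp _ Sy). rewrite Ropp_involutive. split; auto. }
    destruct (orbit_main Sd h fT (-d) X1 X2 X3 X4 X5 X6 X7 X8 X9 X10 (-y) Y)
      as (p & Sp & hp & [yp pB] & approx & fixc).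
    destruct (Rle_lt_or_eq_dec p (-d) pB) as [pl|pe].
    + assert (Ct : cont_at_on r f (-p)) by (apply Hmax'; [exact Sp| lra]).
      assert (fp : fT p = p).
      { apply fixc. intros eps0 He0. destruct (Ct eps0 He0) as [del [Hd H]].
        exists del; split; auto. intros a Sa Ha. unfold fT.
        replace (- f (-a) - - f (-p)) with (-(f (-a) - f (-p))) by ring. rewrite Rabs_Ropp.
        apply H; auto. replace (-a - -p) with (-(a-p)) by ring; rewrite Rabs_Ropp; auto. }
      unfold fT in fp.
      exists (-p). split; [exact Sp|]. split; [lra|]. assert (fp' : f (-p) = -p) by lra. rewrite fp'.
      apply Rabs_def1; lra.
    + destruct (approx eps He) as [w [Sw [Hw1 Hw2]]]. rewrite pe in *. unfold fT in Hw2.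
      exists (-w). split; [exact Sw|]. split; [lra|]. apply Rabs_def1; lra. }
  assert (fd : f d = d).
  { apply eq_of_close. intros eta Heta.
    destruct (Hrc d Dd eta Heta) as [del [Hdel H]].
    destruct (ClaimR (Rmin eta del)) as [w [Dw [Hw1 Hw2]]]; [apply Rmin_pos; lra|].
    assert (Rmin eta del <= eta) by apply Rmin_l. assert (Rmin eta del <= del) by apply Rmin_r.
    specialize (H w Dw ltac:(lra) ltac:(lra)).
    apply Rabs_def2 in H. apply Rabs_def2 in Hw2. apply Rabs_def1; lra. }
  apply Nd. intros eps He.
  destruct (Hrc d Dd eps He) as [delR [HdR HR]].
  destruct (ClaimL (Rmin eps dl)) as [w1 [Hw1 Hfw1]]; [apply Rmin_pos; lra|].
  assert (Rmin eps dl <= eps) by apply Rmin_l. assert (Rmin eps dl <= dl) by apply Rmin_r.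
  exists (Rmin delR (d - w1)). split; [apply Rmin_pos; lra|].
  assert (Rmin delR (d - w1) <= delR) by apply Rmin_l.
  assert (Rmin delR (d - w1) <= d - w1) by apply Rmin_r.
  intros y Dy Hyd. apply Rabs_def2 in Hyd.
  destruct (Rle_lt_dec d y) as [dy|yd].
  - apply HR; auto; lra.
  - destruct (ClaimL (Rmin eps (d - y))) as [w2 [Hw2 Hfw2]]; [apply Rmin_pos; lra|].
    assert (Rmin eps (d - y) <= eps) by apply Rmin_l.
    assert (Rmin eps (d - y) <= d - y) by apply Rmin_r.
    assert (Bt := between r f w1 w2 y).
    destruct Bt as [Bt|Bt].
    + intros t Ht. apply leftcont; lra.
    + exact finj.
    + lra.
    + rewrite fd. apply Rabs_def2 in Hfw1. apply Rabs_def2 in Hfw2. apply Rabs_def1; lra.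
    + rewrite fd. apply Rabs_def2 in Hfw1. apply Rabs_def2 in Hfw2. apply Rabs_def1; lra.
Qed.
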